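(* Let $\lambda\ne0$, let $r>1$, and let $T_1$ be the single-vertex-bag weighted threshold matrix on $v_1,\dots,v_r$ with vertex weights $p^{(1)}_i=0$ if $i\equiv1,2\pmod4$ and $p^{(1)}_i=\lambda$ if $i\equiv0,3\pmod4$ (edge weights $\epsilon^{(1)}_{\ell,j}$ to be chosen). Then for every $i\in\{1,\dots,r-1\}$ the following holds: for every choice of nonzero reals $\epsilon^{(1)}_{\ell,j}$ with $i<\ell<j\le r$, $j$ even, there exist nonzero reals $\epsilon^{(1)}_{\ell,j}$ for all $\ell\le i$ and all even $j>\ell$ ($j\le r$), and single-vertex-bag weighted threshold matrices $T_2,\dots,T_{i+1}$, where $T_m$ lives on $v_m,\dots,v_r$ with vertex weights $p^{(m)}_s$ and edge weights $\epsilon^{(m)}_{s,j}$, such that for every $k\in\{1,\dots,i\}$ (with the convention $\epsilon^{(k)}_{k,k+1}=0$ when $k+1$ is odd): (ii) $\epsilon^{(k)}_{k,j}=\epsilon^{(k)}_{k+1,j}$ for all even $j$ with $k+1<j\le r$; (iii) if $k+1$ is even and $q\in\{0,2\}$ satisfies $k+1\equiv q\pmod 4$, then $\epsilon^{(k)}_{k,k+1}=(q-1)\lambda$; (iv) $p^{(k+1)}_{k+1}=p^{(k)}_k+\epsilon^{(k)}_{k,k+1}$; $\epsilon^{(k+1)}_{k+1,j}=\sqrt2\,\epsilon^{(k)}_{k+1,j}$ for even $j$ with $k+1<j\le r$; $p^{(k+1)}_z=p^{(k)}_z=p^{(1)}_z$ for $k+1<z\le r$; and $\epsilon^{(k+1)}_{z,j}=\epsilon^{(k)}_{z,j}=\epsilon^{(1)}_{z,j}$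 for $k+1<z<j\le r$, $j$ even; (v) $\mathrm{Spec}(T_k)=\mathrm{Spec}(T_{k+1})\cup\{x_k\}$, where $x_k=p^{(k)}_k-\epsilon^{(k)}_{k,k+1}$ (so $x_k=p^{(k)}_k$ if $k$ is even), and $x_k=0$ if $k\equiv0$, $x_k=-\lambda$ if $k\equiv1$, $x_k=\lambda$ if $k\equiv2$, $x_k=2\lambda$ if $k\equiv3\pmod4$.
   Context: A single-vertex-bag weighted threshold matrix on $v_k,\dots,v_r$ is the real symmetric matrix indexed by $v_k,\dots,v_r$ with diagonal entries $p_i$ (the vertex weights) and, for $i<j$, entry $\epsilon_{i,j}\ne 0$ at positions $(v_i,v_j),(v_j,v_i)$ if $j$ is even and entry $0$ if $j$ is odd (so $v_i$ and $v_j$, $i<j$, are adjacent iff $j$ is even). $\mathrm{Spec}$ denotes the multiset of eigenvalues, and $\cup$ of multisets adds multiplicities. *)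

(* Defs.v *)
From HB Require Import structures.
From mathcomp Require Import all_boot all_order all_algebra.
From mathcomp Require Import reals.
Set Implicit Arguments. Unset Strict Implicit. Unset Printing Implicit Defensive.
Import Order.TTheory GRing.Theory Num.Theory.
Local Open Scope ring_scope.

(* A weighted
   threshold matrix on v_k..v_r is given by vertex weights p : nat -> R
   (p s = weight of v_s) and edge weights e : nat -> nat -> R
   (e l j = epsilon_{l,j}, meaningful for l < j). *)

Definition epsE (R : ringType) (e : nat -> nat -> R) (l j : nat) : R :=
  if odd j then 0 else e l j.

Definition svb_matrix (R : ringType) (k r : nat) (p : nat -> R)
  (e : nat -> nat -> R) : 'M[R]_(r.+1 - k) :=
  \matrix_(a < r.+1 - k, b < r.+1 - k)
    let i := (k + a)%N in let j := (k + b)%N in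
    if i == j then p i
    else if (i < j)%N then epsE e i j else epsE e j i.

Definition svb_weights (R : ringType) (k r : nat) (e : nat -> nat -> R) : Prop :=
  forall l j : nat, (k <= l)%N -> (l < j)%N -> (j <= r)%N -> ~~ odd j -> e l j != 0.

(* Spec as a multiset: multiplicity of a as an eigenvalue of A
   (multiplicity as a root of the characteristic polynomial). *)
Definition spec_mult (R : fieldType) (n : nat) (A : 'M[R]_n) (a : R) : nat :=
  mup a (char_poly A).

(* Main.v *)
Require Import Defs.
From HB Require Import structures.
From mathcomp Require Import all_boot all_order all_algebra.
From mathcomp Require Import reals.
From mathcomp Require Import ring zify.
Import Order.TTheory GRing.Theory Num.Theory.
Set Implicit Arguments. Unset Strict Implicit.
Local Open Scope ring_scope.

Lemma cp_twin (R : fieldType) n (F G : nat -> nat -> R) (al eps s : R) :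
  s != 0 -> F 0 0 = al -> F 1 1 = al -> F 0 1 = eps -> F 1 0 = eps ->
  (forall j, (2 <= j)%N -> (j < n.+2)%N -> F 0 j = F 1 j) ->
  G 0 0 = al + eps ->
  (forall j, (0 < j)%N -> (j < n.+1)%N -> G 0 j = s * F 1 j.+1) ->
  (forall i, (0 < i)%N -> (i < n.+1)%N -> s * G i 0 = F i.+1 0 + F i.+1 1) ->
  (forall i j, (0 < i)%N -> (0 < j)%N -> (i < n.+1)%N -> (j < n.+1)%N -> G i j = F i.+1 j.+1) ->
  char_poly (\matrix_(a < n.+2, b < n.+2) F a b) =
  ('X - (al - eps)%:P) * char_poly (\matrix_(a < n.+1, b < n.+1) G a b).
Proof.
move=> s0 F00 F11 F01 F10 Frow G00 G0j Gi0 Gij.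
set A := \matrix_(a, b) F a b; set B := \matrix_(a, b) G a b.
rewrite /char_poly.
set M := char_poly_mx A.
have ME : forall i j : 'I_n.+2, M i j = 'X *+ (val i == val j) - (F i j)%:P.
  by move=> i j; rewrite !mxE.
set q := 'X - (al - eps)%:P.
pose i1 : 'I_n.+2 := Ordinal (isT : (1 < n.+2)%N).
pose M2 := \matrix_(i < n.+2, j < n.+2)
   if val i == 0%N then ((val j == 0%N)%:R - (val j == 1%N)%:R : {poly R}) else M i j.
pose M' := \matrix_(i < n.+2, j < n.+2) if val i == 0%N then M i1 j else M i j.
have step1 : \det M = q * \det M2 + 1 * \det M'.
  apply: (determinant_multilinear (i0 := 0)).
  - apply/rowP => j; rewrite !mxE /=.
    case: j => [[|[|j]] Hj] /=.
    + rewrite F00 F10 /q; rewrite !mulr1n mulr0n !subr0 mulr1 mul1r.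
      rewrite ?polyCB ?polyCN; ring.
    + rewrite F01 F11 /q; rewrite !mulr1n mulr0n !sub0r mul1r.
      rewrite ?polyCB ?polyCN; ring.
    + by rewrite Frow // !mulr0n subrr mulr0 mul1r add0r sub0r.
  - apply/matrixP => i j; rewrite !mxE /=; done.
  - apply/matrixP => i j; rewrite !mxE /=; done.
have detM' : \det M' = 0.
  apply: (determinant_alternate (i1 := 0) (i2 := i1)) => // j.
  by rewrite !mxE.
pose M3 := \matrix_(i < n.+2, j < n.+2) if val j == 1%N then M2 i j + M2 i 0 else M2 i j.
pose M'' := \matrix_(i < n.+2, j < n.+2) if val j == 1%N then M2 i 0 else M2 i j.
have step2 : \det M3 = \det M2.
  rewrite -det_tr -[\det M2]det_tr.
  rewrite (determinant_multilinear (i0 := i1) (B := M2^T) (C := M''^T) (b := 1) (c := 1)).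
  - have -> : \det M''^T = 0.
      apply: (determinant_alternate (i1 := 0) (i2 := i1)) => // j.
      by rewrite !mxE.
    by rewrite mul1r mulr0 addr0.
  - by apply/rowP => j; rewrite !mxE /= !mul1r.
  - apply/matrixP => i j; rewrite !mxE /=.
    have nb: (bump 1 i == 1%N) = false by rewrite eq_sym; exact/negbTE/neq_bump.
    by rewrite nb.
  - apply/matrixP => i j; rewrite !mxE /=.
    have nb: (bump 1 i == 1%N) = false by rewrite eq_sym; exact/negbTE/neq_bump.
    by rewrite nb.
have step3 : \det M3 = \det (row' 0 (col' 0 M3)).
  rewrite (expand_det_row _ 0) big_ord_recl big1 ?addr0.
    by rewrite /cofactor !mxE /= subr0 mul1r expr0 mul1r.
  move=> j _; rewrite !mxE /=.
  case: j => [[|j] Hj] /=.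
    by rewrite subr0 sub0r addrC subrr mul0r.
  by rewrite subrr mul0r.
pose d1 := \row_(i < n.+1) ((if val i == 0%N then s^-1 else 1)%:P : {poly R}).
pose d2 := \row_(i < n.+1) ((if val i == 0%N then s else 1)%:P : {poly R}).
have step4 : row' 0 (col' 0 M3) = diag_mx d1 *m char_poly_mx B *m diag_mx d2.
  rewrite mul_diag_mx mul_mx_diag; apply/matrixP => i j; rewrite !mxE /=.
  have b0 : forall x, bump 0 x = x.+1 by [].
  have ut : (s^-1)%:P * s%:P = 1 :> {poly R} by rewrite -polyCM mulVf.
  rewrite !b0.
  case: i => [[|i] Hi]; case: j => [[|j] Hj] /=.
  - rewrite F11 F10 G00 mulr1n mulr0n polyCD.
    rewrite -mulrA [_ * s%:P]mulrC mulrA ut mul1r; ring.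
  - rewrite mulr1 G0j // polyCM mulr0n !sub0r mulrN mulrA ut mul1r //.
  - rewrite mul1r mulr0n !sub0r mulNr -polyCM [G _ _ * s]mulrC Gi0 // polyCD. ring.
  - rewrite mul1r mulr1 Gij //.
rewrite step1 detM' mulr0 addr0 -step2 step3 step4 !det_mulmx !det_diag.
rewrite !big_ord_recl !big1 ?mulr1; last by move=> k _; rewrite mxE.
  have ut : (s^-1)%:P * s%:P = 1 :> {poly R} by rewrite -polyCM mulVf.
  by rewrite !mxE /= mulrAC ut mul1r.
by move=> k _; rewrite mxE.
Qed.

Lemma cp_twin' (R : fieldType) N1 N2 n (F G : nat -> nat -> R) (al eps s : R) :
  N1 = n.+2 -> N2 = n.+1 ->
  s != 0 -> F 0 0 = al -> F 1 1 = al -> F 0 1 = eps -> F 1 0 = eps ->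
  (forall j, (2 <= j)%N -> (j < n.+2)%N -> F 0 j = F 1 j) ->
  G 0 0 = al + eps ->
  (forall j, (0 < j)%N -> (j < n.+1)%N -> G 0 j = s * F 1 j.+1) ->
  (forall i, (0 < i)%N -> (i < n.+1)%N -> s * G i 0 = F i.+1 0 + F i.+1 1) ->
  (forall i j, (0 < i)%N -> (0 < j)%N -> (i < n.+1)%N -> (j < n.+1)%N -> G i j = F i.+1 j.+1) ->
  char_poly (\matrix_(a < N1, b < N1) F a b) =
  ('X - (al - eps)%:P) * char_poly (\matrix_(a < N2, b < N2) G a b).
Proof. by move=> -> ->; apply: cp_twin. Qed.

Lemma m4 (k : nat) : exists q t, k = (q*4 + t)%N /\ (t < 4)%N.
Proof. by exists (k %/ 4)%N, (k %% 4)%N; rewrite -divn_eq ltn_mod. Qed.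

Definition p1f (R : realType) (lam : R) (z : nat) : R :=
  if ((z %% 4 == 1) || (z %% 4 == 2))%N then 0 else lam.
Definition cc (R : realType) (j : nat) : R := ((j %% 4)%N%:R - 1).
Definition EE (R : realType) (lam : R) (i : nat) (e1 : nat -> nat -> R) (l j : nat) : R :=
  if (i < l)%N then e1 l j
  else if (l == 1)%N && (j == 2)%N then lam
  else if (j <= i.+1)%N then cc R j * lam / Num.sqrt 2 ^+ (j - maxn l 2)
  else e1 i.+1 j / Num.sqrt 2 ^+ (i.+1 - maxn l 2).
Definition ee (R : realType) (lam : R) (i : nat) (e1 : nat -> nat -> R) (m l j : nat) : R :=
  if (l == m) && (1 < m)%N then Num.sqrt 2 * EE lam i e1 l j else EE lam i e1 l j.
Definition pp (R : realType) (lam : R) (m z : nat) : R :=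
  if z == m then p1f lam m.+1 else p1f lam z.

Lemma sqrt2_neq0 (R : realType) : Num.sqrt (2 : R) != 0.
Proof. by rewrite sqrtr_eq0 -ltNge ltr0n. Qed.
Lemma sqrt2_sq (R : realType) : Num.sqrt (2 : R) * Num.sqrt 2 = 2.
Proof. by rewrite -expr2 sqr_sqrtr // ler0n. Qed.

Lemma pow_step (R : realType) (a : R) m : Num.sqrt 2 * (a / Num.sqrt 2 ^+ m.+1) = a / Num.sqrt 2 ^+ m.
Proof.
have s0 := sqrt2_neq0 R.
by rewrite exprS; field; rewrite expf_neq0 ?s0.
Qed.

Lemma cc_neq0 (R : realType) j : ~~ odd j -> cc R j != 0.
Proof.
have [q [t [-> Ht]]] := m4 j.
rewrite /cc modnMDl oddD oddM andbF /=.
case: t Ht => [|[|[|[|t]]]] //= _ _.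
- by rewrite mod0n sub0r oppr_eq0 oner_eq0.
- by rewrite modn_small // (_ : (2%:R : R) - 1 = 1) ?oner_eq0 //; ring.
Qed.

Lemma Lp (R : realType) (lam : R) k :
  p1f lam k.+2 = p1f lam k.+1 + (if odd k.+1 then 0 else cc R k.+1 * lam).
Proof.
have [q [t [-> Ht]]] := m4 k.
rewrite /p1f /cc -!addnS !modnMDl !oddD !oddM !andbF /=.
case: t Ht => [|[|[|[|t]]]] //= _; rewrite ?modnn ?modn_small //=; ring.
Qed.

Lemma Lx (R : realType) (lam : R) k :
  p1f lam k.+1 - (if odd k.+1 then 0 else cc R k.+1 * lam) =
  if (k %% 4 == 0)%N then 0 else if (k %% 4 == 1)%N then - lam
  else if (k %% 4 == 2)%N then lam else 2 * lam.
Proof.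
have [q [t [-> Ht]]] := m4 k.
rewrite /p1f /cc -!addnS !modnMDl !oddD !oddM !andbF /=.
case: t Ht => [|[|[|[|t]]]] //= _; rewrite ?mod0n ?modnn ?modn_small //=; ring.
Qed.

Lemma L3 (R : realType) (lam : R) i e1 k : (1 <= k)%N -> (k <= i)%N ->
  ee lam i e1 k k k.+1 = cc R k.+1 * lam.
Proof.
move=> k1 ki; rewrite /ee eqxx /EE.
case: k k1 ki => [|[|k]] // _ ki /=.
  rewrite ltnNge ki /= /cc modn_small //; ring.
rewrite ltnNge ki /= ltnS ki (maxn_idPl (_ : 2 <= k.+2)%N) //.
by rewrite subSnn (pow_step _ 0) expr0 divr1.
Qed.

Lemma L1 (R : realType) (lam : R) i e1 k J : (1 <= k)%N ->
  ee lam i e1 k.+1 k.+1 J = Num.sqrt 2 * ee lam i e1 k k.+1 J.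
Proof.
move=> k1; rewrite /ee eqxx ltnS k1 /=.
by rewrite (_ : (k.+1 == k) = false) //; apply/negbTE; rewrite neq_ltn ltnSn orbT.
Qed.

Lemma L2 (R : realType) (lam : R) i e1 m m' z j : z != m -> z != m' ->
  ee lam i e1 m z j = ee lam i e1 m' z j.
Proof. by move=> h1 h2; rewrite /ee (negbTE h1) (negbTE h2). Qed.

Lemma Lii (R : realType) (lam : R) i e1 k J : (1 <= k)%N -> (k <= i)%N -> (k.+1 < J)%N ->
  ee lam i e1 k k J = ee lam i e1 k k.+1 J.
Proof.
move=> k1 ki kJ.
have kk : (k.+1 == k) = false by apply/negbTE; rewrite neq_ltn ltnSn orbT.
rewrite /ee eqxx kk /= /EE.
case: k k1 ki kJ kk => [|[|k]] // _ ki kJ _ /=.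
  rewrite (_ : (i < 1)%N = false); last by case: i ki.
  rewrite (_ : (J == 2)%N = false) /=; last by case: J kJ => [|[|[|]]].
  case: ltnP => i2 /=.
    have -> : i = 1%N by apply/eqP; rewrite eqn_leq ki andbT -ltnS i2.
    by rewrite leqNgt kJ /= subnn expr0 divr1.
  done.
rewrite ltnNge ki /= (maxn_idPl (_ : 2 <= k.+2)%N) //.
case: ltnP => ik /=.
  have ei : i = k.+2 by apply/eqP; rewrite eqn_leq ki andbT -ltnS ik.
  subst i; rewrite leqNgt kJ /= subSnn.
  by rewrite (pow_step _ 0) expr0 divr1.
rewrite (maxn_idPl (_ : 2 <= k.+3)%N) //.
case: leqP => Ji /=.
  by rewrite -(subnSK (ltnW kJ)) pow_step.
by rewrite -(subnSK (_ : k.+2 < i.+1)%N) ?pow_step.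
Qed.

Lemma E_neq0 (R : realType) (lam : R) i e1 r l j : lam != 0 ->
  (forall l j : nat, (i < l)%N -> (l < j)%N -> (j <= r)%N -> ~~ odd j -> e1 l j != 0) ->
  (l < j)%N -> (j <= r)%N -> ~~ odd j -> EE lam i e1 l j != 0.
Proof.
move=> lam0 He1 lj jr ej; rewrite /EE.
case: ltnP => il; first exact: He1.
case: ifP => _ //.
have s0 := sqrt2_neq0 R.
case: leqP => ji.
  by rewrite mulf_neq0 ?invr_neq0 ?expf_neq0 // mulf_neq0 // cc_neq0.
by rewrite mulf_neq0 ?invr_neq0 ?expf_neq0 // He1.
Qed.

Theorem mainTheorem5 (R : realType) (lam : R) (r : nat) :
  lam != 0 -> (1 < r)%N ->
  let p1 := fun i : nat => if ((i %% 4 == 1) || (i %% 4 == 2))%N then 0 else lam in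
  forall i : nat, (1 <= i)%N -> (i <= r - 1)%N ->
  forall e1 : nat -> nat -> R,
    (forall l j : nat, (i < l)%N -> (l < j)%N -> (j <= r)%N -> ~~ odd j -> e1 l j != 0) ->
  exists (p : nat -> nat -> R) (e : nat -> nat -> nat -> R),
    (* T_1 has the prescribed vertex weights and the prescribed edge weights *)
    (forall z : nat, (1 <= z)%N -> (z <= r)%N -> p 1%N z = p1 z) /\
    (forall l j : nat, (i < l)%N -> (l < j)%N -> (j <= r)%N -> ~~ odd j ->
       e 1%N l j = e1 l j) /\
    (* T_1, ..., T_(i+1) are single-vertex-bag weighted threshold matrices *)
    (forall m : nat, (1 <= m)%N -> (m <= i.+1)%N -> svb_weights m r (e m)) /\
    (forall k : nat, (1 <= k)%N -> (k <= i)%N ->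
      (* (ii) *)
      (forall j : nat, (k.+1 < j)%N -> (j <= r)%N -> ~~ odd j ->
         e k k j = e k k.+1 j) /\
      (* (iii) *)
      (~~ odd k.+1 ->
         epsE (e k) k k.+1 = ((k.+1 %% 4)%:R - 1) * lam) /\
      (* (iv) *)
      (p k.+1 k.+1 = p k k + epsE (e k) k k.+1) /\
      (forall j : nat, (k.+1 < j)%N -> (j <= r)%N -> ~~ odd j ->
         e k.+1 k.+1 j = Num.sqrt 2 * e k k.+1 j) /\
      (forall z : nat, (k.+1 < z)%N -> (z <= r)%N ->
         p k.+1 z = p k z /\ p k z = p 1%N z) /\
      (forall z j : nat, (k.+1 < z)%N -> (z < j)%N -> (j <= r)%N -> ~~ odd j ->
         e k.+1 z j = e k z j /\ e k z j = e 1%N z j) /\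
      (* (v) *)
      (let x := p k k - epsE (e k) k k.+1 in
       (forall a : R,
          spec_mult (svb_matrix k r (p k) (e k)) a =
          (spec_mult (svb_matrix k.+1 r (p k.+1) (e k.+1)) a + (a == x))%N) /\
       x = (if (k %% 4 == 0)%N then 0
            else if (k %% 4 == 1)%N then - lam
            else if (k %% 4 == 2)%N then lam
            else 2 * lam))).
Proof.
move=> lam0 r1 p1 i i1 ir e1 He1.
have p1E : p1 = p1f lam by [].
have s0 := sqrt2_neq0 R.
exists (pp lam), (ee lam i e1).
split.
  move=> z z1 zr; rewrite p1E /pp; case: eqP => [->|] //.
split.
  by move=> l j il lj jr ej; rewrite /ee andbF /EE il.
split.
  move=> m m1 mi l j ml lj jr ej; rewrite /ee.
  by case: ifP => _; rewrite ?mulf_neq0 // (E_neq0 lam0 He1 lj jr ej).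
move=> k k1 ki.
have kr : (k.+1 <= r)%N by lia.
have kk : (k.+1 == k) = false by apply/eqP; lia.
have lt1 : (k.+1 < k)%N = false by lia.
split.
  move=> j kj jr ej; exact: Lii.
split.
  by move=> ek; rewrite /epsE (negbTE ek) L3.
split.
  by rewrite /pp !eqxx /epsE Lp; case: ifP => // _; rewrite L3.
split.
  move=> j kj jr ej; exact: L1.
split.
  move=> z kz zr; rewrite /pp.
  have h1 : (z == k.+1) = false by apply/eqP; lia.
  have h2 : (z == k) = false by apply/eqP; lia.
  have h3 : (z == 1%N) = false by apply/eqP; lia.
  by rewrite h1 h2 h3.
split.
  move=> z j kz zj jr ej; split; apply: L2; apply/eqP; lia.
move=> x; split; last first.
  rewrite /x /pp eqxx -Lx /epsE; congr (_ - _); case: ifP => // _; exact: L3.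
move=> a; rewrite /spec_mult.
have cp : char_poly (svb_matrix k r (pp lam k) (ee lam i e1 k)) =
   ('X - x%:P) * char_poly (svb_matrix k.+1 r (pp lam k.+1) (ee lam i e1 k.+1)).
  have -> : x = p1f lam k.+1 - epsE (ee lam i e1 k) k k.+1 by rewrite /x /pp eqxx.
  rewrite /svb_matrix.
  apply: (cp_twin' (n := (r - k.+1)%N)
    (F := fun a b : nat => let i0 := (k + a)%N in let j0 := (k + b)%N in
       if i0 == j0 then pp lam k i0
       else if (i0 < j0)%N then epsE (ee lam i e1 k) i0 j0 else epsE (ee lam i e1 k) j0 i0)
    (G := fun a b : nat => let i0 := (k.+1 + a)%N in let j0 := (k.+1 + b)%N in
       if i0 == j0 then pp lam k.+1 i0
       else if (i0 < j0)%N then epsE (ee lam i e1 k.+1) i0 j0 else epsE (ee lam i e1 k.+1) j0 i0)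
    (s := Num.sqrt 2)).
  - lia.
  - lia.
  - exact: s0.
  - by rewrite /= addn0 eqxx /pp eqxx.
  - by rewrite /= addn1 eqxx /pp kk.
  - by rewrite /= addn0 addn1 eq_sym kk ltnSn.
  - by rewrite /= addn0 addn1 kk lt1.
  - move=> j j2 jn /=.
    have -> : (k + 0 == k + j) = false by apply/eqP; lia.
    have -> : (k + 0 < k + j)%N = true by lia.
    have -> : (k + 1 == k + j) = false by apply/eqP; lia.
    have -> : (k + 1 < k + j)%N = true by lia.
    rewrite addn0 addn1 /epsE; case: ifP => // _; apply: Lii => //; lia.
  - by rewrite /= addn0 eqxx /pp eqxx Lp /epsE; case: ifP => // _; rewrite L3.
  - move=> j j0 jn /=.
    have -> : (k.+1 + 0 == k.+1 + j) = false by apply/eqP; lia.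
    have -> : (k.+1 + 0 < k.+1 + j)%N = true by lia.
    have -> : (k + 1 == k + j.+1) = false by apply/eqP; lia.
    have -> : (k + 1 < k + j.+1)%N = true by lia.
    rewrite addn0 addn1 addSnnS /epsE; case: ifP => _; first by rewrite mulr0.
    exact: L1.
  - move=> j j0 jn /=.
    have -> : (k.+1 + j == k.+1 + 0) = false by apply/eqP; lia.
    have -> : (k.+1 + j < k.+1 + 0)%N = false by lia.
    have -> : (k + j.+1 == k + 0) = false by apply/eqP; lia.
    have -> : (k + j.+1 < k + 0)%N = false by lia.
    have -> : (k + j.+1 == k + 1) = false by apply/eqP; lia.
    have -> : (k + j.+1 < k + 1)%N = false by lia.
    rewrite !addn0 addn1 addSnnS /epsE; case: ifP => _; first by rewrite mulr0 addr0.
    rewrite L1 // -Lii //; last by lia.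
    rewrite mulrA sqrt2_sq; ring.
  - move=> i' j' i0 j0 ii jn /=.
    rewrite !addSnnS.
    case: ifP => [/eqP h|_].
      rewrite /pp.
      have -> : (k + i'.+1 == k.+1) = false by apply/eqP; lia.
      have -> : (k + i'.+1 == k) = false by apply/eqP; lia.
      done.
    case: ifP => _; rewrite /epsE; case: ifP => // _; apply: L2; apply/eqP; lia.
rewrite cp mupM ?polyXsubC_eq0 ?monic_neq0 ?char_poly_monic //.
have := mup_XsubCX 1 a x; rewrite expr1 => ->.
by rewrite addnC eq_sym; case: (a == x).
Qed.
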